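(* In the two-stage mining game, suppose miners are homogeneous in their initial costs, $\tilde c_1=\dots=\tilde c_N$, and $\gamma>0$. Fix all parameters except $\eta$ and consider $\eta$ large enough that $A(\beta^* )=A(0)=\{1,\dots,n\}$. Then, as $\eta\to\infty$, $$\Pi^*(\beta^* )=\Pi^*(0)+b\,H^*(0)\,\bar I+O(\bar I^2),\qquad b:=\frac1n\Big(1-\frac{c_0^{(n)}+\gamma H^*(0)}{c_0^{(n)}+2\gamma H^*(0)}\Big)>0,$$ and $b\to0$ as $\gamma\to0$. Here $O(\bar I^2)$ denotes a remainder bounded in absolute value by $C\bar I^2$ for some constant $C$ and all sufficiently large $\eta$.
   Context: Two-stage mining game: $N\ge2$ miners with initial costs-per-hash $\tilde c_i>0$; newest hardware cost $\tilde c_0\le\min_i\tilde c_i$; parameters $\eta\ge0$, $R>0$, $\gamma\ge0$, $K>0$. Stage 1: miner $i$ picks $\beta_i\in[0,1]$, giving cost $c_i(\beta_i)=\tilde c_i-\beta_i(\tilde c_i-\tilde c_0)+\frac{\eta(\tilde c_i-\tilde c_0)}{2}\beta_i^2$. Stage 2: given $\beta$, miners pick $h_i\ge0$, $H=\sum_jh_j$, payoff $\pi_i=\frac{h_i}{H}R-c_i(\beta_i)h_i-\frac{\gamma}{2}h_i^2-K\mathbf 1_{\{i\notin A(0),\beta_i>0\}}$ if $H>0$, else $0$; $h^*(\beta)$ is the unique stage-2 pure Nash equilibrium, $H^*(\beta)=\sum_jh_j^*(\beta)$, $A(\beta)=\{i:h_i^*(\beta)>0\}$, $\pi_i^*(\beta)$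 is miner $i$'s payoff at $(\beta,h^*(\beta))$, and $\Pi^*(\beta)=\sum_{i=1}^n\pi_i^*(\beta)$ is the aggregate profit. The equilibrium investment is $\beta_i^*=\min\{1/\eta,1\}$ for active miners and $0$ otherwise. Notation: $c_0^{(n)}=\sum_{i=1}^n\tilde c_i$; $I_i:=c_i(0)-c_i(\beta_i^* )$, equal to $(\tilde c_i-\tilde c_0)/(2\eta)$ for $\eta>1$; $\bar I=\sum_{i=1}^nI_i$. *)

(* Defs.v *)
From mathcomp Require Import all_boot all_order all_algebra.
Set Implicit Arguments. Unset Strict Implicit. Unset Printing Implicit Defensive.
Import Order.TTheory GRing.Theory Num.Theory.
Local Open Scope ring_scope.

Section Mining.
Variables (R : realFieldType) (N : nat).

Definition mcost (ct c0 eta beta : R) : R :=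
  ct - beta * (ct - c0) + eta * (ct - c0) / 2 * beta ^+ 2.

Definition Htot (h : 'I_N -> R) : R := \sum_(j < N) h j.

(* stage-2 payoff of miner i, given per-miner costs c, the indicator
   charged i = (i \notin A(0)) && (beta_i > 0) of the fixed cost K,
   and a hash-rate profile h *)
Definition payoff (Rw gamma K : R) (c : 'I_N -> R) (charged : 'I_N -> bool)
  (h : 'I_N -> R) (i : 'I_N) : R :=
  if 0 < Htot h then
    h i / Htot h * Rw - c i * h i - gamma / 2 * h i ^+ 2
    - (if charged i then K else 0)
  else 0.

Definition upd (h : 'I_N -> R) (i : 'I_N) (x : R) : 'I_N -> R :=
  fun j => if j == i then x else h j.

Definition stage2_NE (Rw gamma K : R) (c : 'I_N -> R) (charged : 'I_N -> bool)
  (h : 'I_N -> R) : Prop :=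
  (forall i, 0 <= h i) /\
  (forall i x, 0 <= x ->
     payoff Rw gamma K c charged (upd h i x) i <= payoff Rw gamma K c charged h i).

Definition costvec (ct : 'I_N -> R) (c0 eta : R) (beta : 'I_N -> R) : 'I_N -> R :=
  fun i => mcost (ct i) c0 eta (beta i).

Definition charged_of (h0 : 'I_N -> R) (beta : 'I_N -> R) : 'I_N -> bool :=
  fun i => ~~ (0 < h0 i) && (0 < beta i).

Definition aggprofit (Rw gamma K : R) (ct : 'I_N -> R) (c0 eta : R)
  (h0 : 'I_N -> R) (beta : 'I_N -> R) (h : 'I_N -> R) : R :=
  \sum_(i < N) payoff Rw gamma K (costvec ct c0 eta beta) (charged_of h0 beta) h i.

End Mining.

(* beta* = min{1/eta, 1} (the value taken by active miners) *)
Definition betastar_val (R : realFieldType) (eta : R) : R :=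
  if eta <= 1 then 1 else eta^-1.

Definition beta0 (R : realFieldType) (N : nat) : 'I_N -> R := fun _ => 0.

Definition Ibar (R : realFieldType) (N : nat) (ct : 'I_N -> R) (c0 eta : R) : R :=
  \sum_(i < N) (mcost (ct i) c0 eta 0 - mcost (ct i) c0 eta (betastar_val eta)).

Definition bcoef (R : realFieldType) (N : nat) (ct : 'I_N -> R) (gamma H0 : R) : R :=
  let c0n := \sum_(i < N) ct i in
  (N%:R)^-1 * (1 - (c0n + gamma * H0) / (c0n + 2 * gamma * H0)).

(* Main.v *)
Require Import Defs.
From mathcomp Require Import all_boot all_order all_algebra lra ring.
Import Order.TTheory GRing.Theory Num.Theory.
Local Open Scope ring_scope.

Lemma lim0 (R : realFieldType) (P B : R) : 0 <= B ->
  (forall s, 0 < s -> s <= 1 -> P - s * B <= 0) -> P <= 0.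
Proof.
move=> hB hs; rewrite leNgt; apply/negP => hP.
have hPB : 0 < P + B by lra.
have := hs (P / (P + B)).
have h1 : 0 < P / (P + B) by rewrite divr_gt0.
have h2 : P / (P + B) <= 1 by rewrite ler_pdivrMr // mul1r; lra.
move=> /(_ h1 h2).
have -> : P - P / (P + B) * B = P * P / (P + B) by field; apply/eqP; lra.
have : 0 < P * P / (P + B) by rewrite divr_gt0 // mulr_gt0.
lra.
Qed.

Arguments lim0 {R P B}.
Lemma foc_alg (R : realFieldType) (Rw g c S h : R) :
  0 <= S -> 0 < h -> 0 < g ->
  (forall x, 0 < x -> x / (S + x) * Rw - c * x - g / 2 * x ^+ 2
                       <= h / (S + h) * Rw - c * h - g / 2 * h ^+ 2) ->
  Rw * S = (c + g * h) * (S + h) ^+ 2.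
Proof.
move=> hS hh hg NE.
set H := S + h.
have hH : 0 < H by rewrite /H; lra.
set P0 := Rw * S - (c + g * h) * H ^+ 2.
pose Q t := - (c + g * h) * H - g / 2 * H * (H + t).
set B1 := `|c + g * h| * H + g / 2 * H * (H + 1).
have nc : (c + g * h) <= `|c + g * h| by rewrite ler_norm.
have hnc : 0 <= `|c + g * h| by [].
have hB1 : 0 <= B1 by rewrite /B1; nra.
have key : forall t, 0 < H + t -> 0 < h + t ->
   (h + t) / (S + (h + t)) * Rw - c * (h + t) - g / 2 * (h + t) ^+ 2
   - (h / (S + h) * Rw - c * h - g / 2 * h ^+ 2)
   = t * (P0 + t * Q t) / (H * (H + t)).
  move=> t ht1 ht2; rewrite /P0 /Q /H; field.
  apply/andP; split; apply/eqP; rewrite /H in hH ht1; nra.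
have Qlb : forall t, H + t <= H + 1 -> 0 <= H + t -> - B1 <= Q t.
  move=> t t1 t2; rewrite /Q /B1.
  have : g / 2 * H * (H + t) <= g / 2 * H * (H + 1).
    apply: ler_wpM2l => //; apply: mulr_ge0; [apply: divr_ge0; lra | lra].
  have := ler_wpM2r (ltW hH) nc. rewrite mulNr. move: (g / 2 * H * (H + t)) (g / 2 * H * (H + 1)) ((c + g * h) * H) (`|c + g * h| * H) => ?????. lra.
have up : P0 <= 0.
  apply: (lim0 hB1) => s hs0 hs1.
  have hk := key s ltac:(lra) ltac:(lra).
  have := NE (h + s) ltac:(lra); rewrite -subr_le0 hk.
  rewrite pmulr_lle0 ?invr_gt0 ?mulr_gt0 //; last lra.
  rewrite pmulr_rle0 //.
  have := Qlb s ltac:(lra) ltac:(lra).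
  nra.
have dn : - P0 <= 0.
  have hB2 : 0 <= h / 2 * B1 by apply: mulr_ge0 => //; apply: divr_ge0; lra.
  apply: (lim0 hB2) => s hs0 hs1.
  set t := - (h / 2 * s).
  have ht : 0 < h / 2 * s by apply: mulr_gt0 => //; apply: divr_gt0; lra.
  have ht2 : h / 2 * s <= h / 2.
    rewrite -[X in _ <= X]mulr1; apply: ler_wpM2l => //; apply: divr_ge0; lra.
  have hk := key t ltac:(rewrite /t /H; lra) ltac:(rewrite /t; lra).
  have := NE (h + t) ltac:(rewrite /t; lra); rewrite -subr_le0 hk.
  rewrite pmulr_lle0 ?invr_gt0 ?mulr_gt0 //; last (rewrite /t /H; lra).
  have := Qlb t ltac:(rewrite /t; lra) ltac:(rewrite /t /H; lra).
  rewrite /t => qb hneg.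
  have e : - P0 - s * (h / 2 * B1) = - (P0 + - (h / 2 * s) * (- B1)) by ring.
  rewrite e.
  move: hneg; rewrite mulNr oppr_le0 pmulr_rge0 // => hneg.
  have hb := ler_wpM2l (ltW ht) qb.
  rewrite mulrN in hb; rewrite mulrNN.
  move: hb hneg; rewrite mulNr.
  move: (h / 2 * s * Q (- (h / 2 * s))) (h / 2 * s * B1) => a b.
  lra.
have : P0 = 0 by lra.
rewrite /P0 => /eqP; rewrite subr_eq0 => /eqP ->.
by [].
Qed.
Lemma alg1 (R : realFieldType) (Nr Rw c g I a e : R) : 1 <= Nr -> 0 < c -> 0 < g ->
  0 < a -> 0 < e -> 0 <= I ->
  Rw * (Nr - 1) = (c + g * a) * Nr ^+ 2 * a ->
  Rw * (Nr - 1) = (c - I + g * e) * Nr ^+ 2 * e ->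
  `| Nr * (e / (Nr * e) * Rw - (c - I) * e - g / 2 * e ^+ 2)
     - Nr * (a / (Nr * a) * Rw - c * a - g / 2 * a ^+ 2)
     - Nr^-1 * (1 - (Nr * c + g * (Nr * a)) / (Nr * c + 2 * g * (Nr * a)))
       * (Nr * a) * (Nr * I) |
  <= (1 / 2 + g * a / (2 * c)) / (Nr * g) * (Nr * I) ^+ 2.
Proof.
move=> hN hc hg ha he hI E0 E1.
set d := e - a.
have hN2 : Nr ^+ 2 != 0 by apply/eqP; nra.
have E : (c + g * a) * a = (c - I + g * e) * e.
  apply: (mulIf hN2).
  have -> : (c + g * a) * a * Nr ^+ 2 = (c + g * a) * Nr ^+ 2 * a by ring.
  rewrite -E0 E1; ring.
have hd : d * (c + g * (a + e)) = I * e by rewrite /d; move: E; nra.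
have hpos : 0 < c + g * (a + e) by nra.
have hpos2 : 0 < c + 2 * g * a by nra.
have hIe : I = d * (c + g * (a + e)) / e by rewrite hd; field; apply/eqP; lra.
have key : forall J, J = d * (c + g * (a + e)) / e ->
    Nr * (e / (Nr * e) * Rw - (c - J) * e - g / 2 * e ^+ 2)
     - Nr * (a / (Nr * a) * Rw - c * a - g / 2 * a ^+ 2)
     - Nr^-1 * (1 - (Nr * c + g * (Nr * a)) / (Nr * c + 2 * g * (Nr * a)))
       * (Nr * a) * (Nr * J) = Nr * J * d * 
       (g * (a + e) / (2 * (c + g * (a + e))) + a * g * c / (2 * (c + g * (a + e)) * (c + 2 * g * a))).
  move=> J ->; rewrite /d; field.
  by repeat (apply/andP; split); apply/eqP; nra.
rewrite (key I hIe).
set K1 := g * (a + e) / (2 * (c + g * (a + e))).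
set K2 := a * g * c / (2 * (c + g * (a + e)) * (c + 2 * g * a)).
set Km := 1 / 2 + g * a / (2 * c).
have hd0 : 0 <= d.
  rewrite leNgt; apply/negP => dn.
  have : d * (c + g * (a + e)) < 0 by rewrite pmulr_llt0.
  rewrite hd; nra.
have hdg : d <= I / g.
  rewrite ler_pdivlMr //.
  have : d * g * e <= I * e by rewrite -hd; nra.
  rewrite ler_pM2r //.
have hK1 : 0 <= K1 by rewrite /K1; apply: divr_ge0; nra.
have hK2 : 0 <= K2.
  rewrite /K2; apply: divr_ge0.
    by apply: mulr_ge0; [apply: mulr_ge0|]; apply: ltW.
  apply: mulr_ge0; [apply: mulr_ge0|]; lra.
have hK1u : K1 <= 1 / 2.
  rewrite /K1 ler_pdivrMr; last nra.
  rewrite mulrA mul1r mulrC mulVf; last by apply/eqP; lra.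
  rewrite mul1r; nra.
have hK2u : K2 <= g * a / (2 * c).
  rewrite ler_pdivlMr; last lra.
  rewrite /K2 mulrAC ler_pdivrMr; last nra.
  have h1 : c * c <= (c + g * (a + e)) * (c + 2 * g * a) by apply: ler_pM; nra.
  have h2 : 0 <= g * a by nra.
  have := ler_wpM2l h2 h1.
  nra.
have hN0 : 0 <= Nr * I by nra.
have hX : 0 <= Nr * I * d * (K1 + K2) by apply: mulr_ge0 => //; [apply: mulr_ge0 | lra].
rewrite ger0_norm //.
apply: (le_trans (_ : _ <= Nr * I * (I / g * Km))).
  rewrite -mulrA; apply: ler_wpM2l => //.
  apply: ler_pM => //; [lra | rewrite /Km; lra].
rewrite le_eqVlt; apply/orP; left; apply/eqP; rewrite /Km; field.
by repeat (apply/andP; split); apply/eqP; nra.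
Qed.

Set Implicit Arguments. Unset Strict Implicit.
Lemma Htot_upd (R : realFieldType) N (h : 'I_N -> R) i x : Htot (upd h i x) = Htot h - h i + x.
Proof.
rewrite /Htot (bigD1 i) //= [in RHS](bigD1 i) //= /upd eqxx.
rewrite (eq_bigr (fun j => h j)); last by move=> j /negbTE ->.
lra.
Qed.

Lemma S_ge0 (R : realFieldType) N (h : 'I_N -> R) i : (forall j, 0 <= h j) -> 0 <= Htot h - h i.
Proof.
move=> hp; rewrite -[Htot h - h i]addr0 -Htot_upd /Htot.
apply: sumr_ge0 => j _; rewrite /upd; case: ifP => // _.
Qed.

Lemma foc (R : realFieldType) N (Rw g K c : R) (cv : 'I_N -> R) ch (h : 'I_N -> R) i :
  0 < g -> cv i = c -> ch i = false -> (forall j, 0 <= h j) -> 0 < h i ->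
  (forall x, 0 <= x -> payoff Rw g K cv ch (upd h i x) i <= payoff Rw g K cv ch h i) ->
  Rw * (Htot h - h i) = (c + g * h i) * (Htot h) ^+ 2.
Proof.
move=> hg hcv hch hp hi NE.
have hS := S_ge0 i hp.
move: NE; set S := Htot h - h i => NE.
have HE : Htot h = S + h i by rewrite /S; ring.
rewrite HE; apply: foc_alg => // x hx.
have := NE x (ltW hx).
rewrite /payoff Htot_upd -/S.
have -> : (0 < S + x) = true by apply/idP; lra.
have -> : (0 < Htot h) = true by apply/idP; lra.
rewrite /upd eqxx hch hcv HE !subr0 //.
Qed.

Lemma ne_char (R : realFieldType) N (Rw g K c : R) (cv : 'I_N -> R) ch (h : 'I_N -> R) (i0 : 'I_N) :
  0 < Rw -> 0 < g -> (forall i, cv i = c) -> (forall i, ch i = false) ->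
  (forall i, 0 < h i) -> stage2_NE Rw g K cv ch h ->
  (forall j, h j = h i0) /\ Htot h = N%:R * h i0 /\
  Rw * (N%:R - 1) = (c + g * h i0) * N%:R ^+ 2 * h i0.
Proof.
move=> hRw hg hcv hch hp [_ NE].
have hp' : forall j, 0 <= h j by move=> j; apply: ltW.
have F : forall j, Rw * (Htot h - h j) = (c + g * h j) * (Htot h) ^+ 2.
  by move=> j; apply: foc (hcv j) (hch j) hp' (hp j) (NE j).
have sym : forall j, h j = h i0.
  move=> j; have A := F j; have B := F i0; move: A B; set H := Htot h => A B.
  have : (h j - h i0) * (Rw + g * H ^+ 2) = 0.
    have -> : (h j - h i0) * (Rw + g * H ^+ 2) =
      (Rw * (H - h i0) - (c + g * h i0) * H ^+ 2) - (Rw * (H - h j) - (c + g * h j) * H ^+ 2) by ring.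
    by rewrite A B; ring.
  have hpos : 0 < Rw + g * H ^+ 2 by have := sqr_ge0 H; nra.
  move/eqP; rewrite mulf_eq0 (gt_eqF hpos) orbF subr_eq0 => /eqP //.
have HN : Htot h = N%:R * h i0.
  by rewrite /Htot (eq_bigr (fun _ => h i0)) // sumr_const card_ord mulr_natl.
split => //; split => //.
have X := F i0; rewrite HN in X.
have : h i0 * (Rw * (N%:R - 1) - (c + g * h i0) * N%:R ^+ 2 * h i0) = 0.
  have -> : h i0 * (Rw * (N%:R - 1) - (c + g * h i0) * N%:R ^+ 2 * h i0) =
     Rw * (N%:R * h i0 - h i0) - (c + g * h i0) * (N%:R * h i0) ^+ 2 by ring.
  by rewrite X subrr.
move/eqP; rewrite mulf_eq0 (gt_eqF (hp i0)) /= subr_eq0 => /eqP //.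
Qed.

Lemma aggsym (R : realFieldType) N (Rw g K c a : R) (cv : 'I_N -> R) ch (h : 'I_N -> R) :
  (forall i, cv i = c) -> (forall i, ch i = false) -> (forall j, h j = a) -> 0 < Htot h ->
  \sum_(i < N) payoff Rw g K cv ch h i = N%:R * (a / Htot h * Rw - c * a - g / 2 * a ^+ 2).
Proof.
move=> hcv hch hh hH.
rewrite (eq_bigr (fun _ => a / Htot h * Rw - c * a - g / 2 * a ^+ 2)).
  by rewrite sumr_const card_ord mulr_natl.
by move=> i _; rewrite /payoff hH hcv hch hh subr0.
Qed.

Lemma hbound (R : realFieldType) N (Rw g K c : R) (cv : 'I_N -> R) ch (h : 'I_N -> R) :
  0 < Rw -> 0 < g -> 0 < c -> (forall i, cv i = c) -> (forall i, ch i = false) ->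
  stage2_NE Rw g K cv ch h -> 0 <= Htot h /\ Htot h <= N%:R * (Rw / c).
Proof.
move=> hRw hg hc hcv hch [hp NE].
split; first by apply: sumr_ge0 => i _.
have hi : forall i, h i <= Rw / c.
  move=> i; rewrite ler_pdivlMr //.
  have [->|hi0] := eqVneq (h i) 0; first by rewrite mul0r; lra.
  have hi : 0 < h i by rewrite lt_def hi0 hp.
  have hS := S_ge0 i hp.
  have hH : 0 < Htot h by lra.
  have := NE i 0 (lexx _).
  have -> : payoff Rw g K cv ch (upd h i 0) i = 0.
    rewrite /payoff; case: ifP => // _.
    rewrite /upd eqxx hch; rewrite mul0r mul0r mulr0 expr0n /= mulr0; lra.
  rewrite /payoff hH hch hcv subr0 => hge.
  have hfr : h i / Htot h <= 1 by rewrite ler_pdivrMr // mul1r; lra.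
  have : h i / Htot h * Rw <= Rw.
    by rewrite -[X in _ <= X]mul1r; apply: ler_wpM2r => //; apply: ltW.
  have := sqr_ge0 (h i).
  have : 0 <= g / 2 by apply: divr_ge0; lra.
  move: (h i / Htot h * Rw) (h i ^+ 2) => u v ??.
  nra.
have : \sum_(i < N) h i <= \sum_(i < N) (Rw / c) by apply: ler_sum => i _; exact: hi.
by rewrite sumr_const card_ord mulr_natl.
Qed.

Unset Implicit Arguments. Set Strict Implicit.
Theorem proposition5p5 (R : realFieldType) (N : nat) (ct : 'I_N -> R)
  (c0 Rw K : R) :
  (2 <= N)%N ->
  (forall i, 0 < ct i) ->
  (forall i, c0 <= ct i) ->
  (forall i j, ct i = ct j) ->            (* homogeneous initial costs *)
  0 < Rw -> 0 < K ->
  (* (1) fixed gamma > 0, expansion as eta -> oo *)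
  (forall (gamma : R) (h0 : 'I_N -> R) (hstar : R -> 'I_N -> R),
     0 < gamma ->
     (* h0 = h*(0): the stage-2 equilibrium at beta = 0
        (c(0) = ct does not depend on eta) *)
     stage2_NE Rw gamma K (costvec ct c0 0 (@beta0 R N))
               (charged_of h0 (@beta0 R N)) h0 ->
     (* for eta large enough, hstar eta = h^*(betastar) with A(betastar) = A(0) = all *)
     (exists eta1, forall eta, eta1 <= eta ->
        (forall i, 0 < h0 i) /\ (forall i, 0 < hstar eta i) /\
        stage2_NE Rw gamma K
          (costvec ct c0 eta (fun _ => betastar_val eta))
          (charged_of h0 (fun _ => betastar_val eta)) (hstar eta)) ->
     (let H0 := Htot h0 in
     let b := bcoef ct gamma H0 in
     0 < b /\
     exists C : R, exists eta0 : R, forall eta, eta0 <= eta ->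
       `| aggprofit Rw gamma K ct c0 eta h0 (fun _ => betastar_val eta) (hstar eta)
          - aggprofit Rw gamma K ct c0 eta h0 (@beta0 R N) h0
          - b * H0 * Ibar ct c0 eta |
       <= C * (Ibar ct c0 eta) ^+ 2))
  /\
  (* (2) b -> 0 as gamma -> 0+, where H0 = H*(0) depends on gamma *)
  (forall (h0g : R -> 'I_N -> R),
     (forall gamma, 0 < gamma ->
        stage2_NE Rw gamma K (costvec ct c0 0 (@beta0 R N))
                  (charged_of (h0g gamma) (@beta0 R N)) (h0g gamma)) ->
     forall eps : R, 0 < eps -> exists delta : R, 0 < delta /\
       forall gamma, 0 < gamma -> gamma < delta ->
         `| bcoef ct gamma (Htot (h0g gamma)) | < eps).
Proof.
move=> hN hct hc0 hhom hRw hK.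
have N0 : (0 < N)%N by apply: leq_trans hN.
pose i0 : 'I_N := Ordinal N0.
set c := ct i0.
have ctc : forall i, ct i = c by move=> i; rewrite /c; apply: hhom.
have hc : 0 < c by apply: hct.
have hcc0 : c0 <= c by apply: hc0.
have hNr : 2 <= N%:R :> R by rewrite ler_nat.
have sumc : \sum_(i < N) ct i = N%:R * c.
  by rewrite (eq_bigr (fun _ => c)) ?sumr_const ?card_ord ?mulr_natl.
have cv0 : forall eta i, costvec ct c0 eta (@beta0 R N) i = c.
  by move=> eta i; rewrite /costvec /mcost /beta0 ctc; ring.
have ch0 : forall (h : 'I_N -> R) i, charged_of h (@beta0 R N) i = false.
  by move=> h i; rewrite /charged_of /beta0 ltxx andbF.
split.
- move=> g h0 hstar hg NE0 [eta1 Heta1] H0 b.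
  have [hpos0 _] := Heta1 eta1 (lexx _).
  have [sym0 [H0e E0]] := ne_char i0 hRw hg (cv0 0) (ch0 h0) hpos0 NE0.
  set a := h0 i0 in sym0 H0e E0.
  have ha : 0 < a by apply: hpos0.
  have hbe : b = N%:R^-1 * (1 - (N%:R * c + g * (N%:R * a)) / (N%:R * c + 2 * g * (N%:R * a))).
    by rewrite /b /bcoef sumc /H0 H0e.
  have hNa : 0 < N%:R * a by apply: mulr_gt0 => //; lra.
  have hNc : 0 < N%:R * c by apply: mulr_gt0 => //; lra.
  have hgNa : 0 < g * (N%:R * a) by apply: mulr_gt0.
  split.
    rewrite hbe.
    have -> : 1 - (N%:R * c + g * (N%:R * a)) / (N%:R * c + 2 * g * (N%:R * a))
       = g * (N%:R * a) / (N%:R * c + 2 * g * (N%:R * a)).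
      by field; apply/eqP; nra.
    apply: mulr_gt0; first by rewrite invr_gt0; lra.
    apply: divr_gt0; nra.
  exists ((1 / 2 + g * a / (2 * c)) / (N%:R * g)), (Num.max eta1 2).
  move=> eta; rewrite ge_max => /andP [he1 he2].
  have [_ [hposs NEs]] := Heta1 eta he1.
  set I := (c - c0) / (2 * eta).
  have hI : 0 <= I by apply: divr_ge0; lra.
  have bsv : betastar_val eta = eta^-1.
    by rewrite /betastar_val; have -> : (eta <= 1) = false by apply/negbTE; rewrite -ltNge; lra.
  have cvs : forall i, costvec ct c0 eta (fun _ => betastar_val eta) i = c - I.
    move=> i; rewrite /costvec /mcost bsv ctc /I; field; apply/eqP; lra.
  have chs : forall i, charged_of h0 (fun _ => betastar_val eta) i = false.
    by move=> i; rewrite /charged_of hpos0.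
  have [syms [H1e E1]] := ne_char i0 hRw hg cvs chs hposs NEs.
  set e := hstar eta i0 in syms H1e E1.
  have he : 0 < e by apply: hposs.
  have Ibe : Ibar ct c0 eta = N%:R * I.
    rewrite /Ibar (eq_bigr (fun _ => I)) ?sumr_const ?card_ord ?mulr_natl //.
    move=> i _; rewrite bsv ctc /I /mcost; field; apply/eqP; lra.
  have A1 : aggprofit Rw g K ct c0 eta h0 (fun _ => betastar_val eta) (hstar eta)
      = N%:R * (e / (N%:R * e) * Rw - (c - I) * e - g / 2 * e ^+ 2).
    rewrite /aggprofit (aggsym Rw g K cvs chs syms) ?H1e //.
    apply: mulr_gt0 => //; lra.
  have A0 : aggprofit Rw g K ct c0 eta h0 (@beta0 R N) h0
      = N%:R * (a / (N%:R * a) * Rw - c * a - g / 2 * a ^+ 2).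
    rewrite /aggprofit (aggsym Rw g K (cv0 eta) (ch0 h0) sym0) ?H0e //.
  rewrite A1 A0 Ibe hbe /H0 H0e.
  apply: alg1 => //; lra.
- move=> h0g NEg eps heps.
  exists (eps * c ^+ 2 / Rw); split.
    by apply: divr_gt0 => //; apply: mulr_gt0 => //; apply: exprn_gt0.
  move=> g hg hgd.
  have [H0 H1] := hbound hRw hg hc (cv0 0) (ch0 (h0g g)) (NEg g hg).
  move: H0 H1; set H := Htot (h0g g) => H0 H1.
  rewrite /bcoef sumc.
  have hD : 0 < N%:R * c + 2 * g * H by nra.
  have -> : 1 - (N%:R * c + g * H) / (N%:R * c + 2 * g * H)
       = g * H / (N%:R * c + 2 * g * H) by field; apply/eqP; lra.
  set X := g * H / (N%:R * c + 2 * g * H).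
  have hX0 : 0 <= X by apply: divr_ge0; nra.
  have hXe : X * (N%:R * c + 2 * g * H) = g * H by rewrite /X; field; apply/eqP; lra.
  have hHc : H * c <= N%:R * Rw by move: H1; rewrite mulrA ler_pdivlMr.
  have hgR : g * Rw < eps * c ^+ 2 by move: hgd; rewrite ltr_pdivlMr.
  have hNi : N%:R^-1 <= 1 :> R by rewrite invf_le1; lra.
  have hXN : 0 <= N%:R^-1 * X by apply: mulr_ge0 => //; rewrite invr_ge0; lra.
  rewrite ger0_norm //.
  apply: (le_lt_trans (_ : _ <= X)).
    by rewrite -[X in _ <= X]mul1r; apply: ler_wpM2r.
  (* X * N c^2 <= g H c <= g N Rw < N eps c^2 *)
  have s1 : X * (N%:R * c) <= g * H by rewrite -hXe; nra.
  have s2 : X * (N%:R * c) * c <= g * H * c by apply: ler_wpM2r; lra.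
  have s3 : g * (H * c) <= g * (N%:R * Rw) by apply: ler_wpM2l; lra.
  have s4 : N%:R * (g * Rw) < N%:R * (eps * c ^+ 2) by rewrite ltr_pM2l //; lra.
  have s5 : X * (N%:R * c ^+ 2) < eps * (N%:R * c ^+ 2).
    move: s2 s3 s4; rewrite !expr2.
    have -> : X * (N%:R * (c * c)) = X * (N%:R * c) * c by ring.
    have -> : eps * (N%:R * (c * c)) = N%:R * (eps * (c * c)) by ring.
    have -> : g * H * c = g * (H * c) by ring.
    have -> : g * (N%:R * Rw) = N%:R * (g * Rw) by ring.
    move=> ? ? ?; lra.
  by move: s5; rewrite ltr_pM2r //; apply: mulr_gt0; [lra | apply: exprn_gt0].
Qed.
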